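(* Let $A$ be an arbitrary endomorphism of $\mathbb{R}^n$. There exist instants $t_0<t_1$ in $\mathbb{R}$ that are conjugate for the system $v''=Av$ if and only if $A$ has real negative eigenvalues.
   Context: Two instants $t_0<t_1$ are conjugate for a second-order linear system in $\mathbb{R}^n$ if there exists a solution $v$ of the system, not identically zero, with $v(t_0)=v(t_1)=0$. *)

(* Defs.v *)
From HB Require Import structures.
From mathcomp Require Import all_boot all_order all_algebra.
From mathcomp Require Import all_classical all_reals all_analysis.
Set Implicit Arguments. Unset Strict Implicit. Unset Printing Implicit Defensive.
Import Order.TTheory GRing.Theory Num.Theory.
Import numFieldNormedType.Exports.
Local Open Scope ring_scope.

(* The endomorphism A of R^n is represented by a square matrix acting on
   row vectors: x |-> x *m A (MathComp's convention, matching [eigenvalue]). *)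

Definition is_solution (R : realType) (n : nat) (A : 'M[R]_n)
    (v : R -> 'rV[R]_n) : Prop :=
  (forall t : R, derivable v t 1) /\
  (forall t : R, derivable (derive1 v) t 1) /\
  (forall t : R, derive1 (derive1 v) t = v t *m A).

Definition conjugate (R : realType) (n : nat) (A : 'M[R]_n) (t0 t1 : R) : Prop :=
  t0 < t1 /\
  exists v : R -> 'rV[R]_n,
    [/\ is_solution A v, (exists t : R, v t != 0), v t0 = 0 & v t1 = 0].

(* Main.v *)
Require Import Defs.
From HB Require Import structures.
From mathcomp Require Import all_boot all_order all_algebra.
From mathcomp Require Import all_classical all_reals all_analysis.
From mathcomp Require Import complex.
From mathcomp Require Import ring lra.
From Stdlib Require Import Classical.
From mathcomp Require Import zify.
Import Order.TTheory GRing.Theory Num.Theory.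
Import numFieldNormedType.Exports.
Set Implicit Arguments. Unset Strict Implicit. Unset Printing Implicit Defensive.
Local Open Scope ring_scope.
Local Open Scope classical_set_scope.

Section Aux.
Variable R : realType.
Implicit Types f : R -> R.

Lemma dcont f : (forall t, derivable f t 1) -> continuous f.
Proof. move=> df t; apply/differentiable_continuous/derivable1_diffP/df. Qed.

Lemma MVT_all f (a b : R) : (forall t, derivable f t 1) -> a < b ->
  exists2 c, c \in `]a, b[%R & f b - f a = derive1 f c * (b - a).
Proof.
move=> df ab; apply: MVT => //.
- move=> x _; rewrite derive1E; exact/derivableP/df.
- apply: continuous_subspaceT; exact: dcont.
Qed.

Lemma mono_ge0 f (a b u v : R) : (forall t, derivable f t 1) ->
  (forall t, t \in `]a, b[%R -> 0 <= derive1 f t) ->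
  a <= u -> u <= v -> v <= b -> f u <= f v.
Proof.
move=> df pos au uv vb.
case: (ltgtP u v) uv => // [uv _ | -> _]; last by [].
have [c cI E] := MVT_all df uv.
rewrite -subr_ge0 E; apply: mulr_ge0; last by rewrite subr_ge0 ltW.
apply: pos; move: cI; rewrite !in_itv /= => /andP[h1 h2].
by rewrite (le_lt_trans au h1) (lt_le_trans h2 vb).
Qed.

Lemma key f (a b : R) : (forall t, derivable f t 1) -> a < b -> f a = f b ->
  (forall t, t \in `]a, b[%R -> 0 <= derive1 f t) ->
  forall t, t \in `]a, b[%R -> derive1 f t = 0.
Proof.
move=> df ab fab pos t tI.
have fc : forall u, u \in `]a, b[%R -> f u = f a.
  move=> u; rewrite in_itv /= => /andP[au ub]; apply/eqP; rewrite eq_le; apply/andP; split.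
    by rewrite fab; apply: (mono_ge0 df pos) => //; rewrite ltW.
  by apply: (mono_ge0 df pos) => //; rewrite ltW.
rewrite derive1E (@near_eq_derive _ _ _ f (cst (f a))).
  by rewrite derive_cst.
near=> u; apply: fc; near: u; exact: near_in_itvoo.
Unshelve. all: by end_near. Qed.

End Aux.


Section Sys.
Variables (R : realType) (n : nat).

Lemma rowmulE (u : 'rV[R]_n) (M : 'M[R]_n) j : (u *m M) 0 j = \sum_k u 0 k * M k j.
Proof. by rewrite mxE. Qed.

Lemma lin_is_derive (h : 'I_n -> R -> R) (m : 'I_n -> R) (t : R) :
  (forall i, derivable (h i) t 1) ->
  is_derive t 1 (fun s => \sum_i h i s * m i) (\sum_i derive1 (h i) t * m i).
Proof.
move=> dh.
have -> : (fun s => \sum_i h i s * m i) = \sum_i (fun s => h i s * m i).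
  by rewrite fct_sumE.
apply: is_derive_sum => i.
have D : derivable (fun s => h i s * m i) t 1.
  change (derivable (h i * cst (m i)) t 1); apply: derivableM => //; exact: derivable_cst.
by split => //; rewrite -derive1E derive1Mr.
Qed.

Definition cmpt (x : R -> 'rV[R]_n) (j : 'I_n) : R -> R := fun t => x t 0 j.
Definition Dv (x : R -> 'rV[R]_n) : R -> 'rV[R]_n :=
  fun t => \row_j derive1 (cmpt x j) t.
Lemma DvE (x : R -> 'rV[R]_n) t j : Dv x t 0 j = derive1 (cmpt x j) t.
Proof. rewrite /Dv mxE; reflexivity. Qed.

Definition dif (x : R -> 'rV[R]_n) := forall j (t : R), derivable (cmpt x j) t 1.
Definition SOL (A : 'M[R]_n) x :=
  [/\ dif x, dif (Dv x) & forall t, Dv (Dv x) t = x t *m A].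

Lemma dif_derivable (x : R -> 'rV[R]_n) : dif x -> forall t : R, derivable x t 1.
Proof. by move=> dx t; apply/derivable_mxP => i j; rewrite (ord1 i); exact: dx. Qed.

Lemma derivable_dif (x : R -> 'rV[R]_n) : (forall t : R, derivable x t 1) -> dif x.
Proof. by move=> dx j t; move: (dx t) => /derivable_mxP; apply. Qed.

Lemma derive1_Dv (x : R -> 'rV[R]_n) : dif x -> derive1 x = Dv x.
Proof.
move=> dx; apply/funext => t; rewrite derive1E derive_mx; last exact: dif_derivable.
by apply/matrixP => i j; rewrite !mxE (ord1 i) derive1E.
Qed.

Lemma is_sol_SOL (A : 'M[R]_n) (v : R -> 'rV[R]_n) : is_solution A v -> SOL A v.
Proof.
case=> d1 [d2 e].
have dv : dif v by exact: derivable_dif.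
have E := derive1_Dv dv.
rewrite E in d2 e.
have dv2 : dif (Dv v) by exact: derivable_dif.
split; [exact: dv | exact: dv2 | move=> t; rewrite -e (derive1_Dv dv2); reflexivity].
Qed.

Lemma SOL_is_sol (A : 'M[R]_n) (v : R -> 'rV[R]_n) : SOL A v -> is_solution A v.
Proof.
case=> dv dv2 e; split; first exact: dif_derivable.
rewrite (derive1_Dv dv); split; first exact: dif_derivable.
move=> t; rewrite (derive1_Dv dv2); exact: e.
Qed.

Lemma Dv_mulmx (x : R -> 'rV[R]_n) (M : 'M[R]_n) : dif x ->
  dif (fun t => x t *m M) /\ Dv (fun t => x t *m M) = (fun t => Dv x t *m M).
Proof.
move=> dx.
have H (j : 'I_n) (t : R) : is_derive t 1 (cmpt (fun t => x t *m M) j)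
    (\sum_i derive1 (cmpt x i) t * M i j).
  have -> : cmpt (fun t => x t *m M) j = fun s => \sum_i cmpt x i s * M i j.
    by apply/funext => s; rewrite /cmpt mxE.
  exact: lin_is_derive.
split; first by move=> j t; apply: ex_derive; exact: H.
apply/funext => t; apply/matrixP => i j; rewrite (ord1 i) {1}/Dv. rewrite mxE derive1E. have [_ ->] := H j t. rewrite (rowmulE (Dv x t) M j).
by apply: eq_bigr => k _; rewrite DvE.
Qed.

Lemma SOL_mulmx (A : 'M[R]_n) (x : R -> 'rV[R]_n) (M : 'M[R]_n) : M *m A = A *m M -> SOL A x -> SOL A (fun t => x t *m M).
Proof.
move=> MA [dx dx2 e].
have [d1 E1] := Dv_mulmx M dx.
have [d2 E2] := Dv_mulmx M dx2.
split; [exact: d1 | rewrite E1; exact: d2 | move=> t].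
rewrite E1 E2 e -!mulmxA MA; reflexivity.
Qed.

End Sys.


Section Comp.
Variable R : realType.

Lemma derive_scale (f : R -> R) (c t : R) : (forall u : R, derivable f u 1) ->
  derivable (fun s => f (c * s)) t 1 /\
  derive1 (fun s => f (c * s)) t = c * derive1 f (c * t).
Proof.
move=> df.
have dl : derivable (fun s : R => c * s) t 1.
  change (derivable ((cst c) * (@id R)) t 1); apply: derivableM.
    exact: derivable_cst.
  exact: derivable_id.
have hl : derive1 (fun s : R => c * s) t = c.
  have did : derivable (@id R) t 1. exact: derivable_id.
  have := derive1Ml c did.
  rewrite derive1_id mulr1; exact.
have dfc : derivable f (c * t) 1 := df (c * t).
have dc : derivable (f \o (fun s : R => c * s)) t 1.
  apply/derivable1_diffP; apply: differentiable_comp; apply/derivable1_diffP.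
    exact: dl.
  exact: dfc.
split; first exact: dc.
have := derive1_comp dl dfc.
rewrite /comp => ->.
rewrite hl mulrC; reflexivity.
Qed.

Lemma derive_sq (f : R -> R) (t : R) : derivable f t 1 ->
  is_derive t 1 (fun s => f s ^+ 2) (2 * f t * derive1 f t).
Proof.
move=> df.
have D : derivable (fun s => f s ^+ 2) t 1.
  change (derivable (f * f) t 1); apply: derivableM; exact: df.
split; first exact: D.
change ('D_1 (f * f) t = 2 * f t * derive1 f t).
rewrite deriveM; [|exact: df|exact: df].
rewrite -derive1E; rewrite /GRing.scale /=. ring.
Qed.

End Comp.


Section Uniq.
Variables (R : realType) (n : nat).

Lemma is_deriveD' (f g : R -> R) (t df dg : R) :
  is_derive t 1 f df -> is_derive t 1 g dg ->
  is_derive t 1 (fun s => f s + g s) (df + dg).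
Proof. move=> hf hg; exact: (is_deriveD hf hg). Qed.

Lemma is_deriveM' (f g : R -> R) (t df dg : R) :
  is_derive t 1 f df -> is_derive t 1 g dg ->
  is_derive t 1 (fun s => f s * g s) (f t * dg + g t * df).
Proof. move=> hf hg; exact: (is_deriveM hf hg). Qed.

Lemma is_derive_sum' (h : 'I_n -> R -> R) (dh : 'I_n -> R) (t : R) :
  (forall i, is_derive t 1 (h i) (dh i)) ->
  is_derive t 1 (fun s => \sum_i h i s) (\sum_i dh i).
Proof.
move=> H; rewrite -fct_sumE; exact: is_derive_sum.
Qed.

Lemma is_derive_der (f : R -> R) (t : R) : derivable f t 1 ->
  is_derive t 1 f (derive1 f t).
Proof. move=> d; rewrite derive1E; exact: derivableP. Qed.

Lemma le_sum1 (F : 'I_n -> R) j : (forall i, 0 <= F i) -> F j <= \sum_i F i.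
Proof.
move=> F0; rewrite (bigD1 j) //= lerDl; apply: sumr_ge0 => i _; exact: F0.
Qed.

Lemma sq2 (a b : R) : `|2 * a * b| <= a ^+ 2 + b ^+ 2.
Proof.
rewrite ler_norml; apply/andP; split.
  have : 0 <= (a + b) ^+ 2 by exact: sqr_ge0.
  move=> h; nra.
have : 0 <= (a - b) ^+ 2 by exact: sqr_ge0.
move=> h; nra.
Qed.


Lemma uniq_sol (A : 'M[R]_n) (x : R -> 'rV[R]_n) (s : R) :
  SOL A x -> x s = 0 -> Dv x s = 0 -> forall t : R, x t = 0.
Proof.
case=> dx dx2 e xs0 dxs0.
have hE : forall j (t : R), cmpt (Dv x) j t = derive1 (cmpt x j) t.
  move=> j t; exact: (DvE x t j).
have h'E : forall j (t : R), derive1 (cmpt (Dv x) j) t = \sum_i cmpt x i t * A i j.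
  move=> j t; have := DvE (Dv x) t j; rewrite e rowmulE => <-; reflexivity.
pose E := fun t : R => \sum_j (cmpt x j t ^+ 2 + cmpt (Dv x) j t ^+ 2).
pose dE := fun t : R => \sum_j (2 * cmpt x j t * cmpt (Dv x) j t
   + 2 * cmpt (Dv x) j t * \sum_i (cmpt x i t * A i j)).
have HE : forall t : R, is_derive t 1 E (dE t).
  move=> t; apply: is_derive_sum' => j; apply: is_deriveD'.
    apply: is_derive_eq; first exact: (derive_sq (dx j t)).
    rewrite hE; reflexivity.
  apply: is_derive_eq; first exact: (derive_sq (dx2 j t)).
  rewrite h'E; reflexivity.
pose K := \sum_j \sum_i `|A i j|.
have bnd : forall t : R, `|dE t| <= (1 + K) * E t.
  move=> t.
  have Eg : forall i, cmpt x i t ^+ 2 <= \sum_j cmpt x j t ^+ 2.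
    move=> i; apply: le_sum1 => j; exact: sqr_ge0.
  have Eh : forall i, cmpt (Dv x) i t ^+ 2 <= \sum_j cmpt (Dv x) j t ^+ 2.
    move=> i; apply: le_sum1 => j; exact: sqr_ge0.
  have ES : E t = \sum_j cmpt x j t ^+ 2 + \sum_j cmpt (Dv x) j t ^+ 2.
    rewrite /E big_split; reflexivity.
  rewrite /dE big_split /= mulrDl mul1r.
  apply: le_trans (ler_normD _ _) _; apply: lerD.
    apply: le_trans (ler_norm_sum _ _ _) _.
    apply: ler_sum => j _; exact: sq2.
  apply: le_trans (ler_norm_sum _ _ _) _.
  rewrite /K mulr_suml; apply: ler_sum => j _.
  rewrite mulr_sumr; apply: le_trans (ler_norm_sum _ _ _) _.
  rewrite mulr_suml; apply: ler_sum => i _.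
  have -> : 2 * cmpt (Dv x) j t * (cmpt x i t * A i j)
      = A i j * (2 * cmpt x i t * cmpt (Dv x) j t) by ring.
  rewrite normrM; apply: ler_wpM2l; first exact: normr_ge0.
  apply: le_trans (sq2 _ _) _; rewrite ES; apply: lerD; [exact: Eg | exact: Eh].
have E0 : forall t : R, 0 <= E t.
  move=> t; apply: sumr_ge0 => j _; apply: addr_ge0; exact: sqr_ge0.
have Es : E s = 0.
  rewrite /E; apply: big1 => j _.
  have -> : cmpt x j s = 0 by rewrite /cmpt xs0 mxE.
  have -> : cmpt (Dv x) j s = 0 by rewrite /cmpt dxs0 mxE.
  rewrite expr0n /= addr0; reflexivity.
have dexp : forall u : R, derivable expR u 1 := fun u => @derivable_expR R u.
have vexp : forall c u : R, is_derive u 1 (fun v : R => expR (c * v)) (c * expR (c * u)).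
  move=> c u; have [d1 v1] := derive_scale c u dexp.
  split; first exact: d1.
  rewrite -derive1E v1 derive1E; have [_ ->] := is_derive_expR (c * u); reflexivity.
have Ezero : forall t : R, E t = 0.
  move=> t; case: (ltgtP s t) => [st|ts|<-]; last exact: Es.
  - pose F := fun u : R => E u * expR (- (1 + K) * u).
    have HF : forall u : R, is_derive u 1 F
        (E u * (- (1 + K) * expR (- (1 + K) * u)) + expR (- (1 + K) * u) * dE u).
      move=> u; exact: (is_deriveM' (HE u) (vexp _ u)).
    have dF : forall u : R, derivable F u 1 by move=> u; apply: ex_derive; exact: HF.
    have [c _ Hc] := MVT_all dF st.
    have Fc : derive1 F c <= 0.
      rewrite derive1E; have [_ ->] := HF c.
      have := bnd c; have := E0 c; have := expR_gt0 (- (1 + K) * c).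
      rewrite ler_norml => ep Ec /andP[b1 b2]; nra.
    have Fs : F s = 0 by rewrite /F Es mul0r.
    have Ft : F t <= 0.
      have : F t = derive1 F c * (t - s) by rewrite -Hc Fs subr0.
      move=> ->; apply: mulr_le0_ge0; first exact: Fc.
      by rewrite subr_ge0 ltW.
    move: Ft; rewrite /F => Ft.
    have := E0 t; have := expR_gt0 (- (1 + K) * t) => ep Et.
    apply/eqP; rewrite eq_le Et andbT; nra.
  - pose F := fun u : R => E u * expR ((1 + K) * u).
    have HF : forall u : R, is_derive u 1 F
        (E u * ((1 + K) * expR ((1 + K) * u)) + expR ((1 + K) * u) * dE u).
      move=> u; exact: (is_deriveM' (HE u) (vexp _ u)).
    have dF : forall u : R, derivable F u 1 by move=> u; apply: ex_derive; exact: HF.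
    have [c _ Hc] := MVT_all dF ts.
    have Fc : 0 <= derive1 F c.
      rewrite derive1E; have [_ ->] := HF c.
      have := bnd c; have := E0 c; have := expR_gt0 ((1 + K) * c).
      rewrite ler_norml => ep Ec /andP[b1 b2]; nra.
    have Fs : F s = 0 by rewrite /F Es mul0r.
    have Ft : F t <= 0.
      have : - F t = derive1 F c * (s - t) by rewrite -Hc Fs sub0r.
      move=> h; rewrite -oppr_ge0 h; apply: mulr_ge0; first exact: Fc.
      by rewrite subr_ge0 ltW.
    move: Ft; rewrite /F => Ft.
    have := E0 t; have := expR_gt0 ((1 + K) * t) => ep Et.
    apply/eqP; rewrite eq_le Et andbT; nra.
move=> t; apply/matrixP => i j; rewrite (ord1 i) [RHS]mxE.
have : cmpt x j t ^+ 2 <= 0.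
  have h1 : cmpt x j t ^+ 2 <= \sum_k cmpt x k t ^+ 2.
    apply: le_sum1 => k; exact: sqr_ge0.
  have h2 : 0 <= \sum_k cmpt (Dv x) k t ^+ 2.
    apply: sumr_ge0 => k _; exact: sqr_ge0.
  rewrite -(Ezero t) /E big_split /=; apply: le_trans h1 _; rewrite lerDl; exact: h2.
move=> h; have : cmpt x j t ^+ 2 = 0.
  apply/eqP; rewrite eq_le h sqr_ge0; reflexivity.
move/eqP; rewrite sqrf_eq0 => /eqP; exact.
Qed.

End Uniq.


Section Factor.
Variable R : realType.
Local Open Scope complex_scope.

Lemma factor2 (q : {poly R}) : (1 < size q)%N ->
  exists r : {poly R}, (exists l : R, q = r * ('X - l%:P)) \/
    (exists a b : R, b != 0 /\ q = r * (('X - a%:P) ^+ 2 + (b ^+ 2)%:P)).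
Proof.
move=> sq.
pose p := map_poly (real_complex R) q.
have sp : size p = size q by rewrite size_map_poly.
have [z rz] : exists z, root p z.
  apply/closed_rootP; rewrite sp; apply/eqP => h; rewrite h in sq; discriminate.
case: z rz => [a b] rz.
case: (eqVneq b 0) => [b0 | bn0].
  have qa : root q a.
    have h : p.[a%:C] = (q.[a])%:C by rewrite horner_map.
    move: rz; rewrite /root b0 => /eqP rz.
    have : (q.[a])%:C = 0%:C by rewrite -h; exact: rz.
    by case=> ->.
  have /factor_theorem [r qr] := qa.
  by exists r; left; exists a.
pose f : {poly R} := ('X - a%:P) ^+ 2 + (b ^+ 2)%:P.
have sf : size f = 3%N.
  rewrite /f size_addl size_exp_XsubC //.
  by apply: leq_ltn_trans (size_polyC_leq1 _) _.
have f0 : f != 0 by rewrite -size_poly_gt0 sf.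
have Hd := divp_eq q f.
set r0 := q %% f in Hd.
have sr : (size r0 < 3)%N by rewrite -sf ltn_modp f0.
have pf : (map_poly (real_complex R) f).[a +i* b] = 0.
  rewrite /f rmorphD rmorphXn rmorphB /= map_polyX !map_polyC /=.
  rewrite hornerD horner_exp hornerXsubC hornerC.
  apply/eqP; rewrite eq_complex /=; apply/andP; split; apply/eqP; ring.
have pr : (map_poly (real_complex R) r0).[a +i* b] = 0.
  move: rz; rewrite /root /p Hd rmorphD rmorphM /= hornerD hornerM pf mulr0 add0r.
  by move/eqP.
have sr' : (size (map_poly (real_complex R) r0) <= 2)%N by rewrite size_map_poly.
move: pr; rewrite (horner_coef_wide _ sr') !big_ord_recr big_ord0 /= !coef_map /=.
rewrite expr0 expr1 add0r.
move/eqP; rewrite eq_complex /= => /andP[/eqP h1 /eqP h2].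
have c1 : r0`_1 = 0.
  have : r0`_1 * b = 0 by rewrite -[RHS]h2; ring.
  by move/eqP; rewrite mulf_eq0 (negbTE bn0) orbF => /eqP.
have c0 : r0`_0 = 0.
  move: h1; rewrite c1 => h1; rewrite -[RHS]h1; ring.
have r00 : r0 = 0.
  apply/polyP => i; rewrite coef0.
  case: i => [|[|i]]; [exact: c0 | exact: c1 |].
  rewrite nth_default // -ltnS; exact: (leq_trans sr).
exists (q %/ f); right; exists a, b; split; first exact: bn0.
by rewrite {1}Hd r00 addr0.
Qed.

End Factor.


Section Local.
Variables (R : realType) (n : nat).

Lemma is_deriveB' (f g : R -> R) (t df dg : R) :
  is_derive t 1 f df -> is_derive t 1 g dg ->
  is_derive t 1 (fun s => f s - g s) (df - dg).
Proof. move=> hf hg; exact: (is_deriveB hf hg). Qed.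

Lemma is_deriveZ' (f : R -> R) (c t df : R) :
  is_derive t 1 f df -> is_derive t 1 (fun s => c * f s) (c * df).
Proof.
move=> hf; have hc : is_derive t 1 (fun _ : R => c) 0.
  exact: is_derive_cst.
have := is_deriveM' hc hf; rewrite mulr0 addr0; exact.
Qed.

Lemma key_is (k dk : R -> R) (a b : R) : (forall t : R, is_derive t 1 k (dk t)) ->
  a < b -> k a = k b -> (forall t, t \in `]a, b[%R -> 0 <= dk t) ->
  forall t, t \in `]a, b[%R -> dk t = 0.
Proof.
move=> hk ab kab pos.
have dk1 : forall t : R, derivable k t 1 by move=> t; apply: ex_derive; exact: hk.
have ek : forall t : R, derive1 k t = dk t.
  move=> t; rewrite derive1E; have [_ ->] := hk t; reflexivity.
move=> t tI; rewrite -ek; apply: (key dk1 ab kab) => //.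
move=> u uI; rewrite ek; exact: pos.
Qed.

Lemma zero_from_der (g : R -> R) (a b : R) : (forall t : R, derivable g t 1) ->
  g a = 0 -> (forall t, t \in `]a, b[%R -> derive1 g t = 0) ->
  forall t, t \in `]a, b[%R -> g t = 0.
Proof.
move=> dg ga d0 t; rewrite in_itv /= => /andP[hat tb].
have [c cI Hc] := MVT_all dg hat.
move: Hc; rewrite ga subr0 d0 ?mul0r //.
move: cI; rewrite !in_itv /= => /andP[ac ct]; rewrite ac /=.
exact: (lt_trans ct tb).
Qed.

Lemma L1 (A : 'M[R]_n) (y : R -> 'rV[R]_n) (t0 t1 l : R) :
  SOL A y -> t0 < t1 -> y t0 = 0 -> y t1 = 0 -> 0 <= l ->
  (forall t, t \in `]t0, t1[%R -> y t *m A = l *: y t) ->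
  forall t, t \in `]t0, t1[%R -> y t = 0.
Proof.
case=> dy dy2 e lt y0 y1 l0 eig.
have hE : forall j (t : R), cmpt (Dv y) j t = derive1 (cmpt y j) t.
  move=> j t; exact: (DvE y t j).
have h'E : forall j (t : R), derive1 (cmpt (Dv y) j) t = \sum_i cmpt y i t * A i j.
  move=> j t; have := DvE (Dv y) t j; rewrite e rowmulE => <-; reflexivity.
have h'I : forall j t, t \in `]t0, t1[%R -> derive1 (cmpt (Dv y) j) t = l * cmpt y j t.
  move=> j t tI; rewrite h'E -rowmulE eig // mxE; reflexivity.
have gz : forall j t, t \in `]t0, t1[%R -> cmpt y j t = 0.
  move=> j.
  pose k := fun t : R => cmpt y j t * cmpt (Dv y) j t.
  pose dk := fun t : R => cmpt y j t * derive1 (cmpt (Dv y) j) t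
                        + cmpt (Dv y) j t * derive1 (cmpt y j) t.
  have hk : forall t : R, is_derive t 1 k (dk t).
    move=> t; apply: is_deriveM'; apply: is_derive_der; [exact: dy | exact: dy2].
  have k0 : k t0 = 0 by rewrite /k /cmpt y0 mxE mul0r.
  have k1 : k t1 = 0 by rewrite /k /cmpt y1 mxE mul0r.
  have pos : forall t, t \in `]t0, t1[%R -> 0 <= dk t.
    move=> t tI; rewrite /dk h'I // -hE.
    have := sqr_ge0 (cmpt y j t); have := sqr_ge0 (cmpt (Dv y) j t); nra.
  have dk0 := key_is hk lt (etrans k0 (esym k1)) pos.
  apply: (zero_from_der (dy j)).
    rewrite /cmpt y0 mxE; reflexivity.
  move=> t tI; rewrite -hE.
  have := dk0 t tI; rewrite /dk h'I // -hE => h.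
  have := sqr_ge0 (cmpt y j t); have := sqr_ge0 (cmpt (Dv y) j t).
  move=> s1 s2.
  have : cmpt (Dv y) j t ^+ 2 = 0 by nra.
  by move/eqP; rewrite sqrf_eq0 => /eqP.
move=> t tI; apply/matrixP => i j; rewrite (ord1 i) [RHS]mxE.
exact: (gz j t tI).
Qed.


Lemma entryD (u v : 'rV[R]_n) j : (u + v) 0 j = u 0 j + v 0 j.
Proof. by rewrite mxE. Qed.
Lemma entryZ (c : R) (u : 'rV[R]_n) j : (c *: u) 0 j = c * u 0 j.
Proof. by rewrite mxE. Qed.
Lemma entryN (u : 'rV[R]_n) j : (- u) 0 j = - u 0 j.
Proof. by rewrite mxE. Qed.
Lemma entry0 j : (0 : 'rV[R]_n) 0 j = 0.
Proof. by rewrite mxE. Qed.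

Lemma L2 (A : 'M[R]_n) (y : R -> 'rV[R]_n) (t0 t1 a b : R) :
  SOL A y -> t0 < t1 -> y t0 = 0 -> y t1 = 0 -> b != 0 ->
  (forall t, t \in `]t0, t1[%R -> y t *m ((A - a%:M) ^+ 2 + (b ^+ 2)%:M) = 0) ->
  forall t, t \in `]t0, t1[%R -> y t = 0.
Proof.
move=> sy lt y0 y1 bn0 hq.
pose M := A - a%:M.
have MA : M *m A = A *m M.
  by rewrite /M mulmxBl mulmxBr scalar_mxC.
pose z := fun t => y t *m M.
have sz : SOL A z by exact: SOL_mulmx.
case: sy => dy dy2 ey; case: sz => dz dz2 ez.
have yA : forall t : R, y t *m A = z t + a *: y t.
  move=> t; rewrite /z /M mulmxBr mul_mx_scalar subrK; reflexivity.
have zA : forall t, t \in `]t0, t1[%R -> z t *m A = - (b ^+ 2 *: y t) + a *: z t.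
  move=> t tI.
  have h := hq t tI.
  have hM : y t *m (M *m M) = - (b ^+ 2 *: y t).
    move: h; rewrite mulmxDr mul_mx_scalar => /eqP; rewrite addr_eq0 => /eqP <-.
    rewrite /M mulmxE expr2; reflexivity.
  have AE : A = M + a%:M by rewrite /M subrK.
  rewrite /z AE mulmxDr mul_mx_scalar -mulmxA hM; reflexivity.
have gE : forall j (t : R), cmpt (Dv y) j t = derive1 (cmpt y j) t.
  move=> j t; exact: (DvE y t j).
have eE : forall j (t : R), cmpt (Dv z) j t = derive1 (cmpt z j) t.
  move=> j t; exact: (DvE z t j).
have g2 : forall j (t : R), derive1 (cmpt (Dv y) j) t = cmpt z j t + a * cmpt y j t.
  move=> j t; have := DvE (Dv y) t j; rewrite ey yA entryD entryZ => <-; reflexivity.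
have e2 : forall j t, t \in `]t0, t1[%R ->
    derive1 (cmpt (Dv z) j) t = - (b ^+ 2 * cmpt y j t) + a * cmpt z j t.
  move=> j t tI; have := DvE (Dv z) t j; rewrite ez (zA t tI) entryD entryN !entryZ => <-.
  reflexivity.
have z0 : z t0 = 0 by rewrite /z y0 mul0mx.
have z1 : z t1 = 0 by rewrite /z y1 mul0mx.
pose s := `|a| + 1.
have as1 : 1 <= a + s.
  rewrite /s addrA lerDr; case: (lerP 0 a) => ha.
    by rewrite ger0_norm // addr_ge0.
  by rewrite ltr0_norm // subrr.
have gz : forall j t, t \in `]t0, t1[%R -> cmpt y j t = 0.
  move=> j.
  pose g := cmpt y j. pose hg := cmpt (Dv y) j.
  pose e := cmpt z j. pose he := cmpt (Dv z) j.
  pose k := fun t : R => b ^+ 2 * (g t * hg t) + (e t * he t - s * (g t * he t - e t * hg t)).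
  pose dk := fun t : R => b ^+ 2 * (g t * derive1 hg t + hg t * derive1 g t)
     + ((e t * derive1 he t + he t * derive1 e t)
        - s * ((g t * derive1 he t + he t * derive1 g t) - (e t * derive1 hg t + hg t * derive1 e t))).
  have hk : forall t : R, is_derive t 1 k (dk t).
    move=> t.
    have Dg : is_derive t 1 g (derive1 g t) by apply: is_derive_der; exact: dy.
    have Dhg : is_derive t 1 hg (derive1 hg t) by apply: is_derive_der; exact: dy2.
    have De : is_derive t 1 e (derive1 e t) by apply: is_derive_der; exact: dz.
    have Dhe : is_derive t 1 he (derive1 he t) by apply: is_derive_der; exact: dz2.
    exact: (is_deriveD' (is_deriveZ' (b ^+ 2) (is_deriveM' Dg Dhg))
      (is_deriveB' (is_deriveM' De Dhe) (is_deriveZ' s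
         (is_deriveB' (is_deriveM' Dg Dhe) (is_deriveM' De Dhg))))).
  have kt0 : k t0 = 0.
    have g0 : g t0 = 0 by rewrite /g /cmpt y0 entry0.
    have e0 : e t0 = 0 by rewrite /e /cmpt z0 entry0.
    rewrite /k g0 e0; ring.
  have kt1 : k t1 = 0.
    have g0 : g t1 = 0 by rewrite /g /cmpt y1 entry0.
    have e0 : e t1 = 0 by rewrite /e /cmpt z1 entry0.
    rewrite /k g0 e0; ring.
  have dkE : forall t, t \in `]t0, t1[%R -> dk t =
      b ^+ 2 * hg t ^+ 2 + he t ^+ 2 + (a + s) * (b ^+ 2 * g t ^+ 2 + e t ^+ 2).
    move=> t tI; rewrite /dk (e2 j t tI) g2 -gE -eE; rewrite -/g -/hg -/e -/he; ring.
  have pos : forall t, t \in `]t0, t1[%R -> 0 <= dk t.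
    move=> t tI; rewrite (dkE t tI).
    apply: addr_ge0; first (apply: addr_ge0; [apply: mulr_ge0; exact: sqr_ge0 | exact: sqr_ge0]).
    apply: mulr_ge0; first exact: (le_trans ler01 as1).
    apply: addr_ge0; [apply: mulr_ge0; exact: sqr_ge0 | exact: sqr_ge0].
  have dk0 := key_is hk lt (etrans kt0 (esym kt1)) pos.
  move=> t tI.
  have h0 := dk0 t tI; rewrite (dkE t tI) in h0.
  have f1 : 0 <= b ^+ 2 * hg t ^+ 2 by apply: mulr_ge0; exact: sqr_ge0.
  have f2 : 0 <= he t ^+ 2 by exact: sqr_ge0.
  have f3 : 0 <= e t ^+ 2 by exact: sqr_ge0.
  have f5 : 0 <= b ^+ 2 * g t ^+ 2 by apply: mulr_ge0; exact: sqr_ge0.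
  have f6 : 0 <= b ^+ 2 * g t ^+ 2 + e t ^+ 2 by exact: addr_ge0.
  have X0 : b ^+ 2 * g t ^+ 2 = 0 by nra.
  move/eqP: X0; rewrite mulf_eq0 sqrf_eq0 (negbTE bn0) /= sqrf_eq0 => /eqP.
  exact.
move=> t tI; apply/matrixP => i j; rewrite (ord1 i) entry0.
exact: (gz j t tI).
Qed.

End Local.


Section Easy.
Variables (R : realType) (n : nat).

Lemma SOL_scal (A : 'M[R]_n) (w : 'rV[R]_n) (a : R) (phi dphi : R -> R) :
  w *m A = a *: w ->
  (forall t : R, is_derive t 1 phi (dphi t)) ->
  (forall t : R, is_derive t 1 dphi (a * phi t)) ->
  SOL A (fun t => phi t *: w).
Proof.
move=> wA h1 h2.
have c1 : forall j, cmpt (fun t => phi t *: w) j = fun t => phi t * w 0 j.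
  move=> j; apply/funext => t; rewrite /cmpt entryZ; reflexivity.
have d1 : forall j (t : R), is_derive t 1 (cmpt (fun t => phi t *: w) j) (dphi t * w 0 j).
  move=> j t; rewrite c1; have := is_deriveZ' (w 0 j) (h1 t).
  rewrite mulrC; under eq_fun do rewrite mulrC; exact.
have D1 : Dv (fun t => phi t *: w) = fun t => dphi t *: w.
  apply/funext => t; apply/matrixP => i j; rewrite (ord1 i) DvE entryZ derive1E.
  have [_ ->] := d1 j t; reflexivity.
have d2 : forall j (t : R), is_derive t 1 (cmpt (fun t => dphi t *: w) j) (a * phi t * w 0 j).
  move=> j t.
  have -> : cmpt (fun t => dphi t *: w) j = fun t => dphi t * w 0 j.
    apply/funext => u; rewrite /cmpt entryZ; reflexivity.
  have := is_deriveZ' (w 0 j) (h2 t).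
  rewrite mulrC; under eq_fun do rewrite mulrC; exact.
split.
- move=> j t; apply: ex_derive; exact: d1.
- rewrite D1 => j t; apply: ex_derive; exact: d2.
- move=> t; rewrite D1; apply/matrixP => i j; rewrite (ord1 i) DvE derive1E.
  have [_ ->] := d2 j t.
  rewrite -scalemxAl wA entryZ entryZ; ring.
Qed.


Lemma scaled_trig (f df : R -> R) (c : R) :
  (forall u : R, is_derive u 1 f (df u)) ->
  forall t : R, is_derive t 1 (fun s => f (c * s)) (c * df (c * t)).
Proof.
move=> hf t.
have df1 : forall u : R, derivable f u 1 by move=> u; apply: ex_derive; exact: hf.
have [d v] := derive_scale c t df1.
split; first exact: d.
rewrite -derive1E v derive1E; have [_ ->] := hf (c * t); reflexivity.
Qed.

Lemma easy_dir (A : 'M[R]_n) (a : R) : a < 0 -> eigenvalue A a ->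
  exists t0 t1 : R, conjugate A t0 t1.
Proof.
move=> a0 /eigenvalueP [w wA wn0].
pose c := Num.sqrt (- a).
have c0 : 0 < c by rewrite sqrtr_gt0 oppr_gt0.
have cc : c ^+ 2 = - a by rewrite sqr_sqrtr // oppr_ge0 ltW.
have h1 : forall t : R, is_derive t 1 (fun s => sin (c * s)) (c * cos (c * t)).
  exact: (scaled_trig c (@is_derive_sin R)).
have h2 : forall t : R, is_derive t 1 (fun s => c * cos (c * s)) (a * sin (c * t)).
  move=> t; have := is_deriveZ' c (scaled_trig c (@is_derive_cos R) t).
  have -> : c * (c * - sin (c * t)) = a * sin (c * t).
    have -> : a = - c ^+ 2 by rewrite cc opprK.
    ring.
  exact.
have sol := SOL_scal wA h1 h2.
exists 0, (pi / c); split; first by rewrite divr_gt0 // pi_gt0.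
exists (fun t => sin (c * t) *: w); split.
- exact: SOL_is_sol.
- exists (pi / 2 / c).
  have -> : c * (pi / 2 / c) = pi / 2.
    rewrite mulrC divfK //; exact: lt0r_neq0.
  rewrite sin_pihalf scale1r; exact: wn0.
- rewrite mulr0 sin0 scale0r; reflexivity.
- have -> : c * (pi / c) = pi.
    rewrite mulrC divfK //; exact: lt0r_neq0.
  rewrite sinpi scale0r; reflexivity.
Qed.

End Easy.


Section Hard.
Variables (R : realType).

Lemma nonzero_inside (n : nat) (A : 'M[R]_n) (v : R -> 'rV[R]_n) (t0 t1 tn : R) :
  SOL A v -> t0 < t1 -> v tn != 0 ->
  exists2 s, s \in `]t0, t1[%R & v s != 0.
Proof.
move=> sv lt vn.
apply: NNPP => hne.
have z : forall s, s \in `]t0, t1[%R -> v s = 0.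
  move=> s sI; apply: NNPP => hs; apply: hne; exists s => //; apply/eqP; exact: hs.
pose m := (t0 + t1) / 2.
have mI : m \in `]t0, t1[%R by apply: mid_in_itvoo.
have vm : v m = 0 by exact: z.
have dvm : Dv v m = 0.
  apply/matrixP => i j; rewrite (ord1 i) DvE entry0 derive1E.
  rewrite (@near_eq_derive _ _ _ (cmpt v j) (cst 0)).
    by rewrite derive_cst.
  near=> u; rewrite /cmpt z ?entry0 //; near: u; exact: near_in_itvoo.
have := uniq_sol sv vm dvm tn.
by move=> h; move: vn; rewrite h eqxx.
Unshelve. all: by end_near. Qed.


Lemma hard_dir (n : nat) (A : 'M[R]_n) (t0 t1 : R) :
  conjugate A t0 t1 -> exists a : R, a < 0 /\ eigenvalue A a.
Proof.
case=> lt [v [sv0 [tn vn] v0 v1]].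
have sv := is_sol_SOL sv0.
have [s sI vs] := nonzero_inside sv lt vn.
case: n A v sv0 sv tn vn v0 v1 s sI vs => [|n'] A v sv0 sv tn vn v0 v1 s sI vs.
  by move: vs; rewrite [v s]thinmx0 eqxx.
have claim : forall m (q : {poly R}), (size q <= m)%N -> q != 0 ->
    (forall t, t \in `]t0, t1[%R -> v t *m horner_mx A q = 0) ->
    exists a : R, a < 0 /\ eigenvalue A a.
  elim=> [|m IH] q sq q0 hq.
    by move: q0; rewrite -size_poly_eq0 -leqn0 sq.
  case: (leqP (size q) 1) => sq1.
    have qc := size1_polyC sq1.
    have c0 : q`_0 != 0 by move: q0; rewrite {1}qc polyC_eq0.
    have := hq s sI; rewrite qc horner_mx_C mul_mx_scalar => /eqP.
    by rewrite scaler_eq0 (negbTE c0) (negbTE vs).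
  have [r hfr] := factor2 sq1.
  have horn : forall f, q = r * f ->
      forall t, t \in `]t0, t1[%R -> v t *m horner_mx A r *m horner_mx A f = 0.
    move=> f qf t tI; rewrite -mulmxA mulmxE -rmorphM /= -qf; exact: hq.
  have r0 : r != 0.
    by apply/eqP => r0; move: q0; case: hfr => [[l ->]|[a [b [_ ->]]]]; rewrite r0 mul0r eqxx.
  have sr : forall f, q = r * f -> (1 < size f)%N -> (size r <= m)%N.
    move=> f qf sf; have f0 : f != 0 by rewrite -size_poly_gt0 (ltn_trans _ sf).
    move: sq; rewrite qf size_mul // -subn1; move: sf; clear; set a := size r; set b := size f; lia.
  case: (classic (forall t, t \in `]t0, t1[%R -> v t *m horner_mx A r = 0)) => [hr|nhr].
    have sf2 : exists f, q = r * f /\ (1 < size f)%N.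
      case: hfr => [[l ql]|[a [b [_ qf]]]].
        by exists ('X - l%:P); rewrite size_XsubC.
      exists (('X - a%:P) ^+ 2 + (b ^+ 2)%:P); split => //.
      rewrite size_addl size_exp_XsubC //.
      by apply: leq_ltn_trans (size_polyC_leq1 _) _.
    have [f [qf sf]] := sf2.
    exact: (IH r (sr f qf sf) r0 hr).
  have [t' nt'] := not_all_ex_not _ _ nhr.
  have [t'I yt'] := imply_to_and _ _ nt'.
  pose y := fun t => v t *m horner_mx A r.
  have sy : SOL A y.
    apply: SOL_mulmx => //; exact: (comm_horner_mx r (erefl : comm_mx A A)).
  have y0 : y t0 = 0 by rewrite /y v0 mul0mx.
  have y1 : y t1 = 0 by rewrite /y v1 mul0mx.
  case: hfr => [[l ql]|[a [b [bn0 qf]]]].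
    have eig : forall t, t \in `]t0, t1[%R -> y t *m A = l *: y t.
      move=> t tI; have := horn _ ql t tI.
      rewrite rmorphB /= horner_mx_X horner_mx_C mulmxBr mul_mx_scalar => /eqP.
      by rewrite subr_eq0 => /eqP.
    case: (ltP l 0) => l0.
      exists l; split => //; apply/eigenvalueP; exists (y t') => //.
        exact: eig.
      by apply/eqP; exact: yt'.
    by exfalso; apply: yt'; exact: (L1 sy lt y0 y1 l0 eig).
  exfalso; apply: yt'; apply: (L2 sy lt y0 y1 bn0) => // t tI.
  have := horn _ qf t tI.
  rewrite rmorphD rmorphXn rmorphB /= horner_mx_X !horner_mx_C; exact.
apply: (claim (size (char_poly A)) (char_poly A) (leqnn _)).
  exact: monic_neq0 (char_poly_monic A).
move=> t _; rewrite Cayley_Hamilton mulmx0; reflexivity.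
Qed.

End Hard.


Close Scope classical_set_scope.

Theorem lemma3p4 (R : realType) (n : nat) (A : 'M[R]_n) :
  (exists t0 t1 : R, conjugate A t0 t1) <->
  (exists a : R, a < 0 /\ eigenvalue A a).
Proof.
split.
  case=> t0 [t1 h]; exact: (hard_dir h).
case=> a [a0 ea]; exact: (easy_dir a0 ea).
Qed.
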